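(* Let $\lambda$ and $g$ be as in the context. Let $b^{(1)}\in[0,c^{(1)}]$ be the point with $g(b^{(1)})=0$ and set $b^{(2)}=b^{(1)}/\lambda$. Then $g'(b^{(2)})=-1$.
   Context: There is a unique constant $\lambda=2.5029\ldots$ and a unique infinitely (period-doubling) renormalizable analytic unimodal map $g:[-1,1]\to[-1,1]$ solving $g(x)=-\lambda\, g^{2}(-x/\lambda)$ for $-1\le x\le1$ ($g^2=g\circ g$). Unimodal means: $-1$ is the unique fixed point with positive multiplier, $g(1)=-1$, and $g$ has a unique maximum at an interior nondegenerate critical point $c^{(0)}$. Moreover $g$ is analytic near $[-1,1]$, even, concave on $[-c^{(1)},c^{(1)}]$ where $c^{(1)}=g(c^{(0)})$, satisfies $g(c^{(1)})=-c^{(1)}/\lambda$, $g'(c^{(1)})=-\lambda$, and has negative Schwarzian derivative. *)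

(* Defs.v *)
From Stdlib Require Import Reals Lra.
From Coquelicot Require Import Coquelicot.
Open Scope R_scope.

Definition analytic_at (f : R -> R) (x : R) : Prop :=
  exists (a : nat -> R) (r : R), 0 < r /\
    forall y, Rabs (y - x) < r -> is_pseries a (y - x) (f y).

Definition analytic_near_I (f : R -> R) : Prop :=
  exists eps, 0 < eps /\ forall x, -1 - eps < x < 1 + eps -> analytic_at f x.

Definition in_I (x : R) : Prop := -1 <= x <= 1.

Definition unimodal (g : R -> R) (c0 : R) : Prop :=
  (forall x, in_I x -> in_I (g x)) /\
  (g (-1) = -1 /\ 0 < Derive g (-1) /\
     forall x, in_I x -> g x = x -> 0 < Derive g x -> x = -1) /\
  g 1 = -1 /\
  (-1 < c0 < 1 /\ Derive g c0 = 0 /\ Derive_n g 2 c0 <> 0 /\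
     forall x, in_I x -> x <> c0 -> g x < g c0).

Definition even_on_I (g : R -> R) : Prop := forall x, in_I x -> g (- x) = g x.

Definition concave_on (g : R -> R) (a b : R) : Prop :=
  forall x y t, a <= x <= b -> a <= y <= b -> 0 <= t <= 1 ->
    t * g x + (1 - t) * g y <= g (t * x + (1 - t) * y).

Definition schwarzian (g : R -> R) (x : R) : R :=
  Derive_n g 3 x / Derive g x - 3 / 2 * (Derive_n g 2 x / Derive g x) ^ 2.

Definition neg_schwarzian_on_I (g : R -> R) : Prop :=
  forall x, in_I x -> Derive g x <> 0 -> schwarzian g x < 0.

Definition feigenbaum_eq (lam : R) (g : R -> R) : Prop :=
  forall x, in_I x -> g x = - lam * g (g (- x / lam)).

(* Main.v *)
Require Import Defs.
From Stdlib Require Import Reals Lra Lia Psatz.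
From Coquelicot Require Import Coquelicot.
Open Scope R_scope.

Lemma ball_R (x y e : R) : ball x e y <-> Rabs (y - x) < e.
Proof. unfold ball; simpl; unfold AbsRing_ball, abs, minus, plus, opp; simpl. tauto. Qed.

Lemma lim0_bounded (u : nat -> R) : is_lim_seq u 0 -> exists M, forall n, Rabs (u n) <= M.
Proof.
  intro H. apply is_lim_seq_spec in H.
  destruct (H (mkposreal 1 Rlt_0_1)) as [N HN]; simpl in HN.
  assert (Hp : forall K, exists M, forall n, (n <= K)%nat -> Rabs (u n) <= M).
  { induction K as [|K [M HM]].
    - exists (Rabs (u 0%nat)). intros n Hn. assert (n = 0%nat) by lia. subst; lra.
    - exists (Rmax M (Rabs (u (S K)))). intros n Hn.
      destruct (Nat.eq_dec n (S K)) as [->|Hne]. apply Rmax_r.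
      eapply Rle_trans; [apply HM; lia| apply Rmax_l]. }
  destruct (Hp N) as [M HM]. exists (Rmax M 1). intro n.
  destruct (Compare_dec.le_lt_dec n N). eapply Rle_trans; [apply HM; lia| apply Rmax_l].
  specialize (HN n ltac:(lia)). rewrite Rminus_0_r in HN.
  eapply Rle_trans; [left; exact HN| apply Rmax_r].
Qed.

Lemma pseries_radius_pos (a : nat -> R) (z l : R) : 0 < z -> is_pseries a z l ->
  Rbar_lt 0 (CV_radius a).
Proof.
  intros Hz H.
  assert (Hb : exists M, forall n, Rabs (a n * z ^ n) <= M).
  { apply lim0_bounded.
    assert (He : ex_series (fun k => scal (pow_n z k) (a k))) by (eexists; exact H).
    apply ex_series_lim_0 in He.
    eapply is_lim_seq_ext; [|exact He]. intro n; simpl.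
    rewrite pow_n_pow. unfold scal; simpl; unfold mult; simpl. ring. }
  destruct (CV_radius_bounded a) as [Hub _].
  specialize (Hub z Hb).
  destruct (CV_radius a); simpl in *; lra || auto.
Qed.

Lemma analytic_derivable (f : R -> R) (x : R) :
  (exists (a : nat -> R) (r : R), 0 < r /\
    forall y, Rabs (y - x) < r -> is_pseries a (y - x) (f y)) -> ex_derive f x.
Proof.
  intros [a [r [Hr H]]].
  assert (Hrad : Rbar_lt (Rabs 0) (CV_radius a)).
  { rewrite Rabs_R0. apply (pseries_radius_pos a (r/2) (f (x + r/2))). lra.
    replace (r/2) with (x + r/2 - x) at 1 by ring. apply H.
    replace (x + r/2 - x) with (r/2) by ring. rewrite Rabs_pos_eq; lra. }
  assert (Hd : is_derive (fun y => PSeries a (y - x)) x (scal 1 (PSeries (PS_derive a) 0))).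
  { apply (is_derive_comp (PSeries a) (fun y => y - x)).
    replace (x - x) with 0 by ring. apply is_derive_PSeries; exact Hrad.
    auto_derive; auto. }
  exists (scal 1 (PSeries (PS_derive a) 0)).
  apply (is_derive_ext_loc (fun y => PSeries a (y - x))); [|exact Hd].
  exists (mkposreal r Hr). intros y Hy. apply ball_R in Hy. simpl in Hy.
  apply is_pseries_unique. apply H; exact Hy.
Qed.

Theorem mainTheorem5 (lam : R) (g : R -> R) (c0 b1 : R) :
  2.5029 <= lam < 2.503 ->
  feigenbaum_eq lam g ->
  unimodal g c0 ->
  analytic_near_I g ->
  even_on_I g ->
  concave_on g (- g c0) (g c0) ->
  g (g c0) = - g c0 / lam ->
  Derive g (g c0) = - lam ->
  neg_schwarzian_on_I g ->
  0 <= b1 <= g c0 -> g b1 = 0 ->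
  Derive g (b1 / lam) = -1.
Proof.
  intros Hlam Hfe [Hmap [[Hm1 _] [H1 [Hc0 [Hdc0 [_ Hmax]]]]]] [eps [Heps Han]] Hev Hconc Hgc1 Hdc1 _ Hb1 Hgb1.
  assert (Hc00 : c0 = 0).
  { destruct (Req_dec c0 0) as [|Hn]; auto.
    assert (HI : in_I (- c0)) by (unfold in_I; lra).
    specialize (Hmax (- c0) HI ltac:(lra)). rewrite Hev in Hmax by (unfold in_I; lra). lra. }
  subst c0. set (c1 := g 0) in *.
  assert (Hc1I : in_I c1) by (apply Hmap; unfold in_I; lra).
  unfold in_I in Hc1I.
  assert (Hc1pos : 0 < c1).
  { destruct (Req_dec c1 0) as [E|E]; [|lra]. rewrite E in Hdc1. lra. }
  assert (Hder : forall x, -1 <= x <= 1 -> ex_derive g x).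
  { intros x Hx. apply analytic_derivable. apply Han. lra. }
  assert (Hdec : forall x y, 0 <= x < y -> y <= c1 -> g y < g x).
  { intros x y Hxy Hy.
    assert (Hgy : g y < c1) by (apply Hmax; unfold in_I; lra).
    destruct (Req_dec x 0) as [->|Hx0]; [exact Hgy|].
    set (t := 1 - x / y).
    assert (Ht : 0 < t < 1).
    { unfold t. split.
      - assert (E : x / y * y = x) by (field; lra).
        assert (0 < x / y) by (apply Rdiv_lt_0_compat; lra). nra.
      - assert (E : x / y * y = x) by (field; lra). nra. }
    specialize (Hconc 0 y t ltac:(lra) ltac:(lra) ltac:(lra)).
    replace (t * 0 + (1 - t) * y) with x in Hconc by (unfold t; field; lra).
    fold c1 in Hconc. nra. }
  assert (Hb1pos : 0 < b1).
  { destruct (Req_dec b1 0) as [E|E]; [|lra]. subst b1. fold c1 in Hgb1. lra. }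
  assert (Hb1c1 : b1 < c1).
  { destruct (Req_dec b1 c1) as [E|E]; [|lra]. rewrite E in Hgb1. rewrite Hgc1 in Hgb1.
    assert (0 < c1 / lam) by (apply Rdiv_lt_0_compat; lra). lra. }
  set (u := b1 / lam).
  assert (Hu : 0 < u < b1).
  { unfold u. split. apply Rdiv_lt_0_compat; lra.
    apply (Rmult_lt_reg_r lam); [lra|]. field_simplify; nra. }
  assert (Hgu : g u = b1).
  { assert (Hgg : g (g u) = 0).
    { specialize (Hfe b1 ltac:(unfold in_I; lra)). rewrite Hgb1 in Hfe.
      replace (- b1 / lam) with (- u) in Hfe by (unfold u; field; lra).
      rewrite Hev in Hfe by (unfold in_I; lra). nra. }
    assert (Hgu1 : 0 < g u) by (rewrite <- Hgb1; apply Hdec; lra).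
    assert (Hgu2 : g u <= c1) by (left; apply Hmax; unfold in_I; lra).
    destruct (Rtotal_order (g u) b1) as [L|[E|L]]; auto.
    - assert (g b1 < g (g u)) by (apply Hdec; lra). lra.
    - assert (g (g u) < g b1) by (apply Hdec; lra). lra. }
  destruct (Hder u ltac:(lra)) as [Du HDu].
  destruct (Hder b1 ltac:(lra)) as [Db HDb].
  assert (HDm : is_derive g (- b1) (Db * Du)).
  { apply (is_derive_ext_loc (fun x => - lam * g (g (- x / lam)))).
    - assert (Hr : 0 < 1 - b1) by lra.
      exists (mkposreal _ Hr). intros y Hy. apply ball_R in Hy. simpl in Hy.
      apply Rabs_def2 in Hy. unfold minus, plus, opp in Hy; simpl in Hy. symmetry. apply Hfe. unfold in_I. lra.
    - replace (Db * Du) with (- lam * scal (scal (- / lam) Du) Db).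
      + apply is_derive_scal. apply (is_derive_comp g (fun x => g (- x / lam))).
        * replace (- - b1 / lam) with u by (unfold u; field; lra). rewrite Hgu. exact HDb.
        * apply (is_derive_comp g (fun x => - x / lam)).
          -- replace (- - b1 / lam) with u by (unfold u; field; lra). exact HDu.
          -- auto_derive; auto. field; lra.
      + unfold scal; simpl; unfold mult; simpl. field; lra. }
  assert (HDb' : is_derive g b1 (- (Db * Du))).
  { apply (is_derive_ext_loc (fun x => g (- x))).
    - assert (Hr : 0 < 1 - b1) by lra.
      exists (mkposreal _ Hr). intros y Hy. apply ball_R in Hy. simpl in Hy.
      apply Rabs_def2 in Hy. unfold minus, plus, opp in Hy; simpl in Hy. apply Hev. unfold in_I; lra.
    - replace (- (Db * Du)) with (scal (-1) (Db * Du)).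
      + apply (is_derive_comp g (fun x => - x)).
        * exact HDm.
        * auto_derive; auto.
      + unfold scal; simpl; unfold mult; simpl. ring. }
  assert (Eb : Db = - (Db * Du)) by (apply is_derive_unique in HDb; apply is_derive_unique in HDb'; congruence).
  assert (Hneg : Db < 0).
  { apply is_derive_Reals in HDb.
    destruct (Rlt_or_le Db 0) as [|HD]; auto. exfalso.
    set (k := c1 / b1).
    assert (Hk : 0 < k) by (apply Rdiv_lt_0_compat; lra).
    destruct (HDb k Hk) as [d Hd].
    set (h := - Rmin (d / 2) b1).
    assert (Hh : - b1 <= h < 0).
    { unfold h. assert (0 < Rmin (d/2) b1) by (apply Rmin_glb_lt; destruct d; simpl; lra).
      assert (Rmin (d/2) b1 <= b1) by apply Rmin_r. lra. }
    assert (Hhd : Rabs h < d).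
    { rewrite Rabs_left by lra. unfold h. assert (Rmin (d/2) b1 <= d/2) by apply Rmin_l.
      destruct d; simpl in *; lra. }
    specialize (Hd h ltac:(lra) Hhd).
    set (t := - h / b1).
    assert (Ht : 0 < t <= 1).
    { unfold t. split. apply Rdiv_lt_0_compat; lra.
      apply (Rmult_le_reg_r b1); [lra|]. field_simplify; lra. }
    specialize (Hconc 0 b1 t ltac:(lra) ltac:(lra) ltac:(lra)).
    replace (t * 0 + (1 - t) * b1) with (b1 + h) in Hconc by (unfold t; field; lra).
    fold c1 in Hconc. rewrite Hgb1 in Hconc, Hd.
    assert (Htc : t * c1 = - h * k) by (unfold t, k; field; lra).
    set (q := (g (b1 + h) - 0) / h) in Hd.
    assert (Hq : g (b1 + h) = q * h) by (unfold q; field; lra).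
    rewrite Hq in Hconc.
    assert (q <= - k) by nra.
    apply Rabs_def2 in Hd. lra. }
  apply is_derive_unique in HDu. fold u. rewrite HDu.
  apply (Rmult_eq_reg_l Db); [|lra]. nra.
Qed.
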